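(* Let $X$ be a finite $T_0$-space. If $\mathrm{tr}(X_M^2)=0$, then $X$ is a totally ordered set.
   Context: A finite $T_0$-space is identified with a finite poset via $x\le y$ iff $U_x\subseteq U_y$, where $U_x$ is the minimal open set containing $x$. For a labelling $X=\{x_1,\dots,x_n\}$, $X_M=(x_{i,j})$ is the $n\times n$ matrix with $x_{i,j}=0$ if $x_i\le x_j$ and $x_{i,j}=1$ otherwise. *)

(* Defs.v *)
From mathcomp Require Import all_boot all_order all_algebra.
Set Implicit Arguments. Unset Strict Implicit. Unset Printing Implicit Defensive.
Import GRing.Theory.

Definition is_finite_topology (T : finType) (opens : {set {set T}}) : Prop :=
  [/\ set0 \in opens, setT \in opens,
      (forall U V, U \in opens -> V \in opens -> U :|: V \in opens) &
      (forall U V, U \in opens -> V \in opens -> U :&: V \in opens)].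

Definition is_T0 (T : finType) (opens : {set {set T}}) : Prop :=
  forall x y : T, x != y -> exists2 U, U \in opens & (x \in U) != (y \in U).

Definition minopen (T : finType) (opens : {set {set T}}) (x : T) : {set T} :=
  \bigcap_(U in opens | x \in U) U.

Definition tle (T : finType) (opens : {set {set T}}) (x y : T) : bool :=
  minopen opens x \subset minopen opens y.

Definition XM (T : finType) (opens : {set {set T}}) (n : nat) (lab : 'I_n -> T)
  : 'M[int]_n :=
  \matrix_(i < n, j < n) (if tle opens (lab i) (lab j) then 0%R else 1%R).

(* Main.v *)
Require Import Defs.
From mathcomp Require Import all_boot all_order all_algebra.
Local Open Scope ring_scope.
Import Num.Theory.

Theorem mainTheorem12 (T : finType) (opens : {set {set T}}) (n : nat)
  (lab : 'I_n -> T) :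
  is_finite_topology opens -> is_T0 opens -> bijective lab ->
  \tr (XM opens lab *m XM opens lab) = 0 ->
  forall x y : T, tle opens x y || tle opens y x.
Proof.
move=> _ _ [g fg gf] Htr x y.
have Hnn : forall i j : 'I_n, 0 <= XM opens lab i j * XM opens lab j i.
  by move=> i j; rewrite !mxE; case: ifP; case: ifP.
have Hs : forall i : 'I_n, 0 <= (XM opens lab *m XM opens lab) i i.
  move=> i; rewrite mxE; apply: sumr_ge0 => j _; exact: Hnn.
have Hi := @psumr_eq0P _ _ _ _ (fun i _ => Hs i) Htr (g x) isT.
move: Hi; rewrite mxE => Hi.
have Hj := @psumr_eq0P _ _ _ _ (fun j _ => Hnn (g x) j) Hi (g y) isT.
move: Hj; rewrite !mxE !gf.
by case: (tle opens x y); case: (tle opens y x).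
Qed.
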